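(* Consider the Joint Randomized Response (JRR) mechanism described in the context, with parameters $0.5<p\le 1$, $q=1-p$ and $1-1/p\le\rho\le 1$, applied to $n$ contributors (with $n$ even) holding binary values $x_1,\dots,x_n\in\{0,1\}$. For $v\in\{0,1\}$ let $n_v$ be the number of contributors with $x_j=v$ and let $I_v$ be the number of reported values $y_j$ equal to $v$. Then the estimator $$\hat n_v=\frac{I_v-nq}{p-q}$$ is an unbiased estimator of $n_v$, i.e. $\mathrm{E}[\hat n_v]=n_v$, for each $v\in\{0,1\}$.
   Context: JRR mechanism: the $n$ contributors are partitioned uniformly at random into $n/2$ disjoint groups of two. In each group $\{u_a,u_b\}$ a pair of indicator variables $(T_a,T_b)\in\{0,1\}^2$ is drawn, independently across groups, with joint distribution $\Pr[T_a=1,T_b=1]=p^2+\rho pq$, $\Pr[T_a=1,T_b=0]=\Pr[T_a=0,T_b=1]=(1-\rho)pq$, $\Pr[T_a=0,T_b=0]=q^2+\rho pq$. Each contributor $u_j$ reports $y_j=x_j$ if $T_j=1$ and $y_j=1-x_j$ if $T_j=0$. *)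

(* Defs.v *)
From mathcomp Require Import all_boot all_order all_algebra all_fingroup.
Set Implicit Arguments. Unset Strict Implicit. Unset Printing Implicit Defensive.
Import Order.TTheory GRing.Theory Num.Theory.
Local Open Scope ring_scope.

(* Values in {0,1} are encoded as bool (false = 0, true = 1). *)

(* A partition of the n contributors into disjoint groups of two is encoded
   as a fixed-point-free involution s of 'I_n: the groups are {i, s i}. *)
Definition is_pairing (n : nat) (s : {perm 'I_n}) : bool :=
  [forall i, (s (s i) == i) && (s i != i)].

Definition pairings (n : nat) : {set {perm 'I_n}} := [set s | is_pairing s].

(* Joint distribution of (T_a, T_b) in one group. *)
Definition jrr_pair_pmf (R : pzRingType) (p rho : R) (a b : bool) : R :=
  let q := 1 - p in
  if a then (if b then p ^+ 2 + rho * p * q else (1 - rho) * p * q)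
  else (if b then (1 - rho) * p * q else q ^+ 2 + rho * p * q).

(* Probability of the indicator vector T given the pairing s: independent
   across groups; each group {i, s i} is counted once (for i < s i). *)
Definition jrr_T_prob (R : pzRingType) (n : nat) (p rho : R) (s : {perm 'I_n})
  (T : {ffun 'I_n -> bool}) : R :=
  \prod_(i : 'I_n | (i < s i)%N) jrr_pair_pmf p rho (T i) (T (s i)).

Definition jrr_report (n : nat) (x T : {ffun 'I_n -> bool}) (j : 'I_n) : bool :=
  if T j then x j else ~~ x j.

Definition count_reports (n : nat) (x T : {ffun 'I_n -> bool}) (v : bool) : nat :=
  #|[set j | jrr_report x T j == v]|.

Definition count_values (n : nat) (x : {ffun 'I_n -> bool}) (v : bool) : nat :=
  #|[set j | x j == v]|.

Definition jrr_expect (R : fieldType) (n : nat) (p rho : R)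
  (X : {perm 'I_n} -> {ffun 'I_n -> bool} -> R) : R :=
  (#|pairings n|%:R)^-1 *
  \sum_(s in pairings n) \sum_(T : {ffun 'I_n -> bool}) jrr_T_prob p rho s T * X s T.

(* Main.v *)
Require Import Defs.
From mathcomp Require Import all_boot all_order all_algebra all_fingroup.
From mathcomp Require Import ring lra zify.
Import Order.TTheory GRing.Theory Num.Theory.
Local Open Scope ring_scope.

Lemma pairingP n (s : {perm 'I_n}) : is_pairing s -> forall i, s (s i) = i /\ s i != i.
Proof. by move=> /forallP H i; have /andP[/eqP -> ->] := H i. Qed.

Lemma pair_sum (R : comPzRingType) n (s : {perm 'I_n}) (F : 'I_n -> bool -> bool -> R) :
  is_pairing s ->
  \sum_(T : {ffun 'I_n -> bool}) \prod_(i : 'I_n | (i < s i)%N) F i (T i) (T (s i))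
  = \prod_(i : 'I_n | (i < s i)%N) \sum_(a : bool) \sum_(c : bool) F i a c.
Proof.
move=> /pairingP Hs.
under [RHS]eq_bigr do rewrite pair_bigA /=.
rewrite (big_distr_big (false,false) _ predT) /=.
pose h (T : {ffun 'I_n -> bool}) : {ffun 'I_n -> bool * bool} :=
  [ffun i : 'I_n => if (i < s i)%N then (T i, T (s i)) else (false, false)].
pose h' (f : {ffun 'I_n -> bool * bool}) : {ffun 'I_n -> bool} :=
  [ffun i : 'I_n => if (i < s i)%N then (f i).1 else (f (s i)).2].
rewrite (reindex h) /=; last first.
  exists h' => [T _|f Hf]; apply/ffunP => i; rewrite !ffunE.
  - case: ifP => Hi; first by rewrite Hi.
    have [H1 H2] := Hs i.
    have -> : (s i < s (s i))%N by rewrite H1; move/negbT: Hi; move: H2; rewrite -val_eqE /=; lia.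
    by rewrite H1.
  - move: Hf; rewrite unfold_in /= => /pffun_onP [/subsetP Hsup _].
    case: ifP => Hi.
      rewrite (proj1 (Hs i)) Hi.
      have -> : (s i < i)%N = false by lia.
      by case: (f i).
    case: (f i =P (false,false)) => [->//|/eqP Hne].
    by have := Hsup i; rewrite !unfold_in /= Hi Hne => /(_ isT).
apply: eq_big.
  move=> T /=; symmetry; apply/pffun_onP; split=> //.
  apply/subsetP => i; rewrite !inE ffunE; by case: ifP.
move=> T _; apply: eq_bigr => i Hi; by rewrite ffunE Hi.
Qed.

Section Main.
Variable R : realFieldType.
Variables p rho : R.
Local Notation f := (jrr_pair_pmf p rho).

Lemma pmf_sum : \sum_(a : bool) \sum_(c : bool) f a c = 1.
Proof. rewrite !big_bool /= /jrr_pair_pmf /=; ring. Qed.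

Lemma pmf_sum1 b : \sum_(a : bool) \sum_(c : bool) f a c * (a == b)%:R = if b then p else 1 - p.
Proof. rewrite !big_bool /= /jrr_pair_pmf /=; case: b => /=; ring. Qed.

Lemma pmf_sum2 b : \sum_(a : bool) \sum_(c : bool) f a c * (c == b)%:R = if b then p else 1 - p.
Proof. rewrite !big_bool /= /jrr_pair_pmf /=; case: b => /=; ring. Qed.

Lemma prod_sel n (s : {perm 'I_n}) (j : 'I_n) (A : R) (H : 'I_n -> R) :
  is_pairing s ->
  (forall i : 'I_n, (i < s i)%N -> H i = (if i == j then A else if i == s j then A else 1)) ->
  \prod_(i : 'I_n | (i < s i)%N) H i = A.
Proof.
move=> /pairingP Hs HH.
have [H1 H2] := Hs j.
have Hne : (nat_of_ord j != s j) by rewrite eq_sym.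
case: (ltnP j (s j)) => Hj.
  rewrite (bigD1 j) //= HH // eqxx big1 ?mulr1 // => i /andP [Hi Hij].
  rewrite HH // (negbTE Hij); case: eqP => // E.
  by move: Hi; rewrite E H1; lia.
have Hj' : (s j < s (s j))%N by rewrite H1; move: Hne Hj; lia.
rewrite (bigD1 (s j)) //= HH // eqxx.
have -> : (s j == j) = false by apply/negbTE; rewrite eq_sym.
rewrite big1 ?mulr1 // => i /andP [Hi Hij].
rewrite HH // (negbTE Hij); case: eqP => // E.
by move: Hi; rewrite E; lia.
Qed.

Lemma T_prob_sum n (s : {perm 'I_n}) : is_pairing s ->
  \sum_T jrr_T_prob p rho s T = 1.
Proof.
move=> Hs; rewrite /jrr_T_prob (@pair_sum _ _ s (fun _ => f)) //.
by rewrite big1 // => i _; rewrite pmf_sum.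
Qed.

Lemma T_prob_marg n (s : {perm 'I_n}) (j : 'I_n) (b : bool) : is_pairing s ->
  \sum_T jrr_T_prob p rho s T * (T j == b)%:R = if b then p else 1 - p.
Proof.
move=> Hs; have [H1 H2] := @pairingP _ _ Hs j.
pose W (i : 'I_n) (a c : bool) : R :=
  if i == j then (a == b)%:R else if i == s j then (c == b)%:R else 1.
transitivity (\sum_(T : {ffun 'I_n -> bool}) \prod_(i : 'I_n | (i < s i)%N)
    (f (T i) (T (s i)) * W i (T i) (T (s i)))).
  apply: eq_bigr => T _; rewrite big_split /=; congr (_ * _).
  symmetry; apply: (@prod_sel n s j _ (fun i => W i (T i) (T (s i)))) => // i Hi; rewrite /W.
  case: eqP => [->//|_]; case: eqP => [->|//]; by rewrite H1.
rewrite (@pair_sum _ _ s (fun i a c => f a c * W i a c)) //; apply: (@prod_sel n s j _ (fun i => \sum_(a : bool) \sum_(c : bool) f a c * W i a c)) => // i Hi; rewrite /W.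
case: eqP => [_|_]; first by rewrite -pmf_sum1.
case: eqP => [_|_]; first by rewrite -pmf_sum2.
by under eq_bigr do under eq_bigr do rewrite mulr1; rewrite pmf_sum.
Qed.
End Main.

Lemma pairings_nonempty n : ~~ odd n -> (0 < #|pairings n|)%N.
Proof.
case: n => [|m] Hodd.
  apply/card_gt0P; exists 1%g; rewrite inE; apply/forallP => -[i Hi] //.
pose g (i : 'I_m.+1) : 'I_m.+1 := inord (if odd i then i.-1 else i.+1).
have gv : forall i, nat_of_ord (g i) = (if odd i then i.-1 else i.+1).
  move=> i; rewrite inordK //; case: ifP => Ho.
    have := ltn_ord i; lia.
  rewrite ltn_neqAle ltn_ord andbT; apply/eqP => E.
  by move: Hodd; rewrite -E /= Ho.
have gg : cancel g g.
  move=> i; apply: val_inj; rewrite /= !gv.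
  case: (nat_of_ord i) => [|k] //=.
  by case hk: (odd k) => /=; rewrite ?hk.
have g_inj : injective g by apply: can_inj gg.
apply/card_gt0P; exists (perm g_inj); rewrite inE; apply/forallP => i.
rewrite !permE gg eqxx /=; rewrite -val_eqE /= gv.
case: (nat_of_ord i) => [|k] //=; case: (odd k) => /=; lia.
Qed.

Lemma report_eq n (x T : {ffun 'I_n -> bool}) j v :
  (jrr_report x T j == v) = (T j == (x j == v)).
Proof. by rewrite /jrr_report; case: (T j); case: (x j); case: v. Qed.

Lemma cardE (R : realFieldType) n (P : pred 'I_n) :
  (#|[set j | P j]|)%:R = \sum_j (P j)%:R :> R.
Proof.
rewrite -sum1_card natr_sum big_mkcond /=; apply: eq_bigr => j _.
by rewrite inE; case: (P j).
Qed.

Theorem theorem1 (R : realFieldType) (n : nat) (p rho : R)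
  (x : {ffun 'I_n -> bool}) (v : bool) :
  ~~ odd n ->
  1 / 2 < p <= 1 ->
  1 - p^-1 <= rho <= 1 ->
  jrr_expect p rho
    (fun _ T => ((count_reports x T v)%:R - n%:R * (1 - p)) / (p - (1 - p)))
  = (count_values x v)%:R.
Proof.
move=> Hn /andP[Hp1 Hp2] _.
have Hd : (p - (1 - p) != 0).
  have H : 0 < p - (1 - p) by lra.
  by rewrite gt_eqF.
rewrite /jrr_expect (eq_bigr (fun _ => (count_values x v)%:R)); last first.
  move=> s; rewrite inE => Hs.
  rewrite /count_reports /count_values !cardE.
  under eq_bigr do rewrite mulrA mulrBr.
  rewrite -big_distrl /= sumrB -big_distrl /= T_prob_sum // mul1r.
  under eq_bigr do rewrite cardE.
  under eq_bigr do rewrite mulr_sumr.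
  rewrite exchange_big /=.
  under eq_bigr => j _ do (under eq_bigr do rewrite report_eq; rewrite T_prob_marg //).
  have ifE : forall c : bool, (if c then p else 1 - p) = c%:R * (p - (1 - p)) + (1 - p).
    by case => /=; ring.
  under eq_bigr do rewrite ifE.
  rewrite big_split /= -mulr_suml sumr_const card_ord -[(1 - p) *+ n]mulr_natl.
  move: (\sum_(j < n) _) => S.
  field; exact: Hd.
have Hc : (#|pairings n|%:R : R) != 0.
  by rewrite pnatr_eq0 -lt0n pairings_nonempty.
rewrite sumr_const.
move: Hc; move: (count_values x v)%:R => a; move: #|pairings n| => c Hc.
rewrite -mulr_natl; field; exact: Hc.
Qed.
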